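(* In the three-agent investor/hedge-fund setting with restricted reports, fix the investor's report $\tilde m$. Then the unique Nash equilibrium between the two hedge funds (each choosing its report to maximize its own utility given the other's report) is $$M'_{12}=M'_{13}=\frac{c}{1-s}=\frac{a\nu-\tilde m(1-\nu)(\nu-\eta)}{\nu+(1-\nu)(\nu-\eta)},$$ where $c=\frac{a\nu-\tilde\alpha(1-\nu)}{\nu(2-\nu)}$, $s=\frac{\eta(1-\nu)}{\nu(2-\nu)}$ and $\tilde\alpha=\tilde m/(2+\rho)$.
   Context: Three agents: agent 1 (investor), agents 2 and 3 (hedge funds). Parameters $m,a\in\mathbb{R}$ and $\rho\in(-1,1)$; true beliefs $M=\begin{pmatrix}0&a&a\\ m&0&0\\ m&0&0\end{pmatrix}$ (column $i$ is agent $i$'s true belief vector $\mu_i$), $\Sigma=\begin{pmatrix}1&0&0\\0&1&\rho\\0&\rho&1\end{pmatrix}$, $\Gamma=I_3$. Restricted reports: the investor reports a common value $\tilde m$ for $M'_{21}=M'_{31}$, fund 2 reports $M'_{12}=\tilde a$, fund 3 reports $M'_{13}=\tilde b$, and all other entries of $M'$ equal the true value $0$. The stable point for $M'$ is the unique $(W,P)$ with $W=W^T$, $P^T=-P$ and $M'-P=2\Sigma W\Gamma$. Agent $i$'s utility is $g_i=w_i^T(\mu_i-Pe_i)-w_i^T\Sigma w_i$, $w_i=We_i$. Define $\nu=\tfrac12\big(\tfrac1{2-\rho}+\tfrac1{2+\rho}\big)$ and $\eta=\tfrac12\big(\tfrac1{2-\rho}-\tfrac1{2+\rho}\big)$. 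*)

(* Defs.v *)
(* matrices over an abstract real field. Agents 1,2,3 are indices 0,1,2. *)
From HB Require Import structures.
From mathcomp Require Import all_boot all_order all_algebra.
Set Implicit Arguments. Unset Strict Implicit. Unset Printing Implicit Defensive.
Import Order.TTheory GRing.Theory Num.Theory.
Local Open Scope ring_scope.

Section Model.
Variable R : realFieldType.

(* true beliefs M: column i is agent i's belief vector *)
Definition trueM (m a : R) : 'M[R]_3 :=
  \matrix_(i < 3, j < 3)
    if ((i : nat) == 0%N) && (((j : nat) == 1%N) || ((j : nat) == 2%N)) then a
    else if ((j : nat) == 0%N) && (((i : nat) == 1%N) || ((i : nat) == 2%N)) then m
    else 0.

Definition Sigma (rho : R) : 'M[R]_3 :=
  \matrix_(i < 3, j < 3)
    if i == j then 1
    else if (((i : nat) == 1%N) && ((j : nat) == 2%N)) ||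
            (((i : nat) == 2%N) && ((j : nat) == 1%N)) then rho
    else 0.

Definition Gamma : 'M[R]_3 := 1%:M.

(* restricted reports: M'_{21}=M'_{31}=mt, M'_{12}=at, M'_{13}=bt, rest 0 *)
Definition reportM (mt at_ bt : R) : 'M[R]_3 :=
  \matrix_(i < 3, j < 3)
    if ((j : nat) == 0%N) && (((i : nat) == 1%N) || ((i : nat) == 2%N)) then mt
    else if ((i : nat) == 0%N) && ((j : nat) == 1%N) then at_
    else if ((i : nat) == 0%N) && ((j : nat) == 2%N) then bt
    else 0.

Definition stable_point (rho : R) (M' W P : 'M[R]_3) : Prop :=
  W^T = W /\ P^T = - P /\ M' - P = 2%:R *: (Sigma rho *m W *m Gamma).

Definition g (m a rho : R) (i : 'I_3) (W P : 'M[R]_3) : R :=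
  let w := col i W in
  ((w^T *m (col i (trueM m a) - col i P)) - (w^T *m Sigma rho *m w)) ord0 ord0.

(* u is agent i's utility when the reported matrix is M' (evaluated at the
   stable point for M', which is unique) *)
Definition util (m a rho : R) (i : 'I_3) (M' : 'M[R]_3) (u : R) : Prop :=
  exists W P, stable_point rho M' W P /\ u = g m a rho i W P.

Definition idx1 : 'I_3 := @Ordinal 3 1 isT.
Definition idx2 : 'I_3 := @Ordinal 3 2 isT.

Definition best_response2 (m a rho mt x y : R) : Prop :=
  exists u, util m a rho idx1 (reportM mt x y) u /\
    forall x' u', util m a rho idx1 (reportM mt x' y) u' -> u' <= u.

Definition best_response3 (m a rho mt x y : R) : Prop :=
  exists u, util m a rho idx2 (reportM mt x y) u /\
    forall y' u', util m a rho idx2 (reportM mt x y') u' -> u' <= u.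

Definition nash_funds (m a rho mt x y : R) : Prop :=
  best_response2 m a rho mt x y /\ best_response3 m a rho mt x y.

End Model.

(* Main.v *)
Require Import Defs.
From HB Require Import structures.
From mathcomp Require Import all_boot all_order all_algebra.
From mathcomp Require Import ring lra.
Import Order.TTheory GRing.Theory Num.Theory.
Local Open Scope ring_scope.

Notation i0 := (@Ordinal 3 0 isT).
Notation i1 := (@Ordinal 3 1 isT).
Notation i2 := (@Ordinal 3 2 isT).

Lemma sum3 (R : realFieldType) (F : 'I_3 -> R) : \sum_(k < 3) F k = F i0 + F i1 + F i2.
Proof.
rewrite !big_ord_recr big_ord0 /= add0r.
by congr (F _ + F _ + F _); apply: val_inj.
Qed.

Definition nuf {R : realFieldType} (rho : R) := (((2 - rho)^-1 + (2 + rho)^-1) / 2).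
Definition etaf {R : realFieldType} (rho : R) := (((2 - rho)^-1 - (2 + rho)^-1) / 2).
Definition B1 {R : realFieldType} (rho mt x y : R) :=
  nuf rho * (x + mt) / 2 - etaf rho * (y + mt) / 2.

Lemma nueta {R : realFieldType} (rho : R) : -1 < rho < 1 ->
  [/\ 2 * nuf rho - etaf rho * rho = 1, nuf rho * rho = 2 * etaf rho,
      2 - rho != 0 & 2 + rho != 0].
Proof.
move=> /andP [h1 h2].
have n1 : 2 - rho != 0 by apply/eqP; lra.
have n2 : 2 + rho != 0 by apply/eqP; lra.
by split => //; rewrite /nuf /etaf; field; rewrite n1 n2.
Qed.

Lemma entries (R : realFieldType) rho mt x y (W P : 'M[R]_3) : -1 < rho < 1 ->
  stable_point rho (reportM mt x y) W P ->
  [/\ [/\ W i0 i0 = 0, W i1 i1 = 0, W i1 i2 = 0 & W i2 i2 = 0],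
      W i0 i1 = B1 rho mt x y, W i0 i2 = B1 rho mt y x &
      [/\ P i0 i1 = x - 2 * B1 rho mt x y, P i0 i2 = y - 2 * B1 rho mt y x,
          P i1 i2 = 0, P i1 i1 = 0 & P i2 i2 = 0]].
Proof.
move=> hr; case=> HW [HP HM].
have eW i j : W i j = W j i by rewrite -{1}HW mxE.
have eP i j : P i j = - P j i by rewrite -{1}(opprK P) -HP !mxE.
have eP0 i : P i i = 0 by have := eP i i; lra.
have E (i j : 'I_3) := congr1 (fun M : 'M[R]_3 => M i j) HM.
rewrite /Gamma mulmx1 in E.
have E00 := E i0 i0. have E01 := E i0 i1. have E02 := E i0 i2.
have E10 := E i1 i0. have E11 := E i1 i1. have E12 := E i1 i2.
have E20 := E i2 i0. have E21 := E i2 i1. have E22 := E i2 i2.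
move: E00 E01 E02 E10 E11 E12 E20 E21 E22.
rewrite /= !mxE !sum3 !mxE /=.
rewrite (eW i1 i0) (eW i2 i0) (eW i2 i1) (eP i1 i0) (eP i2 i0) (eP i2 i1) !eP0.
have [F1 F2 _ _] := nueta rho hr.
case/andP: hr => hr1 hr2.
move=> E00 E01 E02 E10 E11 E12 E20 E21 E22.
have w11 : W i1 i1 = - rho * W i1 i2 by lra.
have w22 : W i2 i2 = - rho * W i1 i2 by lra.
rewrite w11 w22 in E12 E21.
have w12' : W i1 i2 * (1 - rho^+2) = 0 by rewrite expr2; lra.
have w12 : W i1 i2 = 0.
  move/eqP: w12'; rewrite mulf_eq0 => /orP [/eqP //|].
  move=> /eqP h; exfalso; clear -hr1 hr2 h; rewrite expr2 in h; nra.
have q1 : 2 * W i0 i1 + rho * W i0 i2 = (x + mt) / 2 by lra.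
have q2 : rho * W i0 i1 + 2 * W i0 i2 = (y + mt) / 2 by lra.
have b1 : W i0 i1 = B1 rho mt x y.
  have : nuf rho * (2 * W i0 i1 + rho * W i0 i2) - etaf rho * (rho * W i0 i1 + 2 * W i0 i2)
     = W i0 i1 * (2 * nuf rho - etaf rho * rho) + W i0 i2 * (nuf rho * rho - 2 * etaf rho) by ring.
  rewrite F1 F2 q1 q2 /B1 => h; lra.
have b2 : W i0 i2 = B1 rho mt y x.
  have : nuf rho * (rho * W i0 i1 + 2 * W i0 i2) - etaf rho * (2 * W i0 i1 + rho * W i0 i2)
     = W i0 i2 * (2 * nuf rho - etaf rho * rho) + W i0 i1 * (nuf rho * rho - 2 * etaf rho) by ring.
  rewrite F1 F2 q1 q2 /B1 => h; lra.
split => //; first (split; rewrite ?w11 ?w22 ?w12 ?mulr0 //; lra).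
split; rewrite -?b1 -?b2; lra.
Qed.

Lemma sys1 {R : realFieldType} (rho mt x y : R) : -1 < rho < 1 ->
  2 * B1 rho mt x y + rho * B1 rho mt y x = (x + mt) / 2.
Proof.
move=> hr; have [F1 F2 _ _] := nueta rho hr.
have -> : 2 * B1 rho mt x y + rho * B1 rho mt y x =
  (2 * nuf rho - etaf rho * rho) * ((x+mt)/2) + (nuf rho * rho - 2 * etaf rho) * ((y + mt)/2)
  by rewrite /B1; ring.
by rewrite F1 F2; ring.
Qed.

Definition Wsol {R : realFieldType} (rho mt x y : R) : 'M[R]_3 :=
  \matrix_(i < 3, j < 3)
   if (((i:nat) == 0%N) && ((j:nat) == 1%N)) || (((i:nat) == 1%N) && ((j:nat) == 0%N))
   then B1 rho mt x y
   else if (((i:nat) == 0%N) && ((j:nat) == 2%N)) || (((i:nat) == 2%N) && ((j:nat) == 0%N))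
   then B1 rho mt y x else 0.

Definition Psol {R : realFieldType} (rho mt x y : R) : 'M[R]_3 :=
  \matrix_(i < 3, j < 3)
   if ((i:nat) == 0%N) && ((j:nat) == 1%N) then x - 2 * B1 rho mt x y
   else if ((i:nat) == 1%N) && ((j:nat) == 0%N) then - (x - 2 * B1 rho mt x y)
   else if ((i:nat) == 0%N) && ((j:nat) == 2%N) then y - 2 * B1 rho mt y x
   else if ((i:nat) == 2%N) && ((j:nat) == 0%N) then - (y - 2 * B1 rho mt y x)
   else 0.

Lemma sol_stable {R : realFieldType} (rho mt x y : R) : -1 < rho < 1 ->
  stable_point rho (reportM mt x y) (Wsol rho mt x y) (Psol rho mt x y).
Proof.
move=> hr; have s1 := sys1 rho mt x y hr; have s2 := sys1 rho mt y x hr.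
split; [|split]; apply/matrixP => i j; rewrite !mxE ?sum3 ?mxE;
  case: i => [[|[|[|i]]] Hi] //; case: j => [[|[|[|j]]] Hj] //=;
  rewrite ?sum3 ?mxE /=; try lra.
Qed.

Definition G {R : realFieldType} (b a x : R) := b * (a - x + b).

Lemma util1 {R : realFieldType} (m a rho mt x y u : R) : -1 < rho < 1 ->
  util m a rho idx1 (reportM mt x y) u <-> u = G (B1 rho mt x y) a x.
Proof.
move=> hr; split.
- case=> W [P [st ->]].
  have [[w00 w11 w12 w22] b1 b2 [p01 p02 p12 p11 p22]] := @entries _ rho mt x y W P hr st.
  case: st => HW [HP _].
  have eW i j : W i j = W j i by rewrite -{1}HW mxE.
  have eP i j : P i j = - P j i by rewrite -{1}(opprK P) -HP !mxE.
  rewrite /g /G /idx1 !mxE !sum3 !mxE !sum3 !mxE /=.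
  rewrite (eW i2 i1) (eP i2 i1) w11 w12 b1 p01 p11 p12; ring.
- move=> ->; exists (Wsol rho mt x y), (Psol rho mt x y); split; first exact: sol_stable.
  rewrite /g /G /idx1 !mxE !sum3 !mxE !sum3 !mxE /=; ring.
Qed.

Lemma util2 {R : realFieldType} (m a rho mt x y u : R) : -1 < rho < 1 ->
  util m a rho idx2 (reportM mt x y) u <-> u = G (B1 rho mt y x) a y.
Proof.
move=> hr; split.
- case=> W [P [st ->]].
  have [[w00 w11 w12 w22] b1 b2 [p01 p02 p12 p11 p22]] := @entries _ rho mt x y W P hr st.
  case: st => HW [HP _].
  have eW i j : W i j = W j i by rewrite -{1}HW mxE.
  have eP i j : P i j = - P j i by rewrite -{1}(opprK P) -HP !mxE.
  rewrite /g /G /idx2 !mxE !sum3 !mxE !sum3 !mxE /=.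
  rewrite w22 w12 b2 p02 p22 p12; ring.
- move=> ->; exists (Wsol rho mt x y), (Psol rho mt x y); split; first exact: sol_stable.
  rewrite /g /G /idx2 !mxE !sum3 !mxE !sum3 !mxE /=; ring.
Qed.

Lemma argmax {R : realFieldType} (nu eta a mt y x : R) : 0 < nu * (2 - nu) ->
  (forall x', G (nu*(x'+mt)/2 - eta*(y+mt)/2) a x' <= G (nu*(x+mt)/2 - eta*(y+mt)/2) a x)
  <-> x = (a*nu - mt*(nu-eta)*(1-nu) + eta*(1-nu)*y)/(nu*(2-nu)).
Proof.
move=> hn.
have hn0 : nu * (2 - nu) != 0 by rewrite gt_eqF.
set v := (a*nu - mt*(nu-eta)*(1-nu) + eta*(1-nu)*y)/(nu*(2-nu)).
have key z : G (nu*(v+mt)/2 - eta*(y+mt)/2) a v - G (nu*(z+mt)/2 - eta*(y+mt)/2) a z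
   = nu * (2 - nu) / 4 * (z - v)^+2.
  rewrite /v /G; field.
  by move: hn0; rewrite mulf_eq0 negb_or => /andP [-> ->].
split.
- move=> H; have := H v; have := key x.
  set A := G _ a v; set B := G _ a x => k hle.
  have : nu * (2 - nu) / 4 * (x - v) ^+ 2 <= 0 by lra.
  have hsq : 0 <= (x - v)^+2 by apply: sqr_ge0.
  move=> h2.
  have h3 : nu * (2 - nu) / 4 * (x - v) ^+ 2 = 0.
    apply/eqP; rewrite eq_le h2 /=; apply: mulr_ge0 => //; apply: divr_ge0; lra.
  move/eqP: h3; rewrite mulf_eq0 mulf_eq0 invr_eq0 (negbTE hn0) /= sqrf_eq0 subr_eq0.
  case/orP=> /eqP; [lra | done].
- move=> -> z; have := key z.
  have : 0 <= nu * (2 - nu) / 4 * (z - v) ^+ 2.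
    apply: mulr_ge0; [apply: divr_ge0; lra | exact: sqr_ge0].
  lra.
Qed.

Lemma bounds {R : realFieldType} (p q : R) : 1/3 < p < 1 -> 1/3 < q < 1 ->
  [/\ 0 < (p + q) / 2 * (2 - (p + q) / 2),
      0 < (p + q) / 2 * (2 - (p + q) / 2) - (p - q) / 2 * (1 - (p + q) / 2) &
      0 < (p + q) / 2 * (2 - (p + q) / 2) + (p - q) / 2 * (1 - (p + q) / 2)].
Proof. move=> /andP [h1 h2] /andP [h3 h4]; split; nra. Qed.

Lemma inv_bounds {R : realFieldType} (d : R) : 1 < d < 3 -> 1/3 < d^-1 < 1.
Proof.
move=> /andP [h1 h2].
have hd : d^-1 * d = 1 by rewrite mulVf //; apply/eqP; lra.
have hpos : 0 < d^-1 by rewrite invr_gt0; lra.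
apply/andP; split; nra.
Qed.

Lemma br2_iff {R : realFieldType} (m a rho mt x y : R) : -1 < rho < 1 ->
  best_response2 m a rho mt x y <->
  forall x', G (B1 rho mt x' y) a x' <= G (B1 rho mt x y) a x.
Proof.
move=> hr; split.
- case=> u [hu H] x'; have := proj1 (util1 m a rho mt x y u hr) hu.
  move=> <-; apply: (H x' (G (B1 rho mt x' y) a x')); exact/(util1 m a rho mt x' y _ hr).
- move=> H; exists (G (B1 rho mt x y) a x); split; first exact/(util1 m a rho mt x y _ hr).
  by move=> x' u' /(util1 m a rho mt x' y u' hr) ->.
Qed.

Lemma br3_iff {R : realFieldType} (m a rho mt x y : R) : -1 < rho < 1 ->
  best_response3 m a rho mt x y <->
  forall y', G (B1 rho mt y' x) a y' <= G (B1 rho mt y x) a y.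
Proof.
move=> hr; split.
- case=> u [hu H] y'; have := proj1 (util2 m a rho mt x y u hr) hu.
  move=> <-; apply: (H y' (G (B1 rho mt y' x) a y')); exact/(util2 m a rho mt x y' _ hr).
- move=> H; exists (G (B1 rho mt y x) a y); split; first exact/(util2 m a rho mt x y _ hr).
  by move=> y' u' /(util2 m a rho mt x y' u' hr) ->.
Qed.

Theorem mainTheorem13 (R : realFieldType) (m a rho mt : R)
  (hrho : -1 < rho < 1) :
  let nu := (((2 - rho)^-1 + (2 + rho)^-1) / 2) in
  let eta := (((2 - rho)^-1 - (2 + rho)^-1) / 2) in
  let alpha := mt / (2 + rho) in
  let c := (a * nu - alpha * (1 - nu)) / (nu * (2 - nu)) in
  let s := (eta * (1 - nu)) / (nu * (2 - nu)) in
  c / (1 - s) = (a * nu - mt * (1 - nu) * (nu - eta)) / (nu + (1 - nu) * (nu - eta))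
  /\ (forall x y : R, nash_funds m a rho mt x y <-> (x = c / (1 - s) /\ y = c / (1 - s))).
Proof.
move=> nu eta alpha c s.
have hB x y : B1 rho mt x y = nu * (x + mt) / 2 - eta * (y + mt) / 2 by [].
case/andP: (hrho) => hr1 hr2.
have hp1 := @inv_bounds R (2 - rho) ltac:(apply/andP; split; lra).
have hq1 := @inv_bounds R (2 + rho) ltac:(apply/andP; split; lra).
have [hnu hK1 hK2] : [/\ 0 < nu * (2 - nu), 0 < nu * (2 - nu) - eta * (1 - nu)
   & 0 < nu * (2 - nu) + eta * (1 - nu)] := @bounds _ _ _ hp1 hq1.
have ha : alpha = mt * (nu - eta).
  rewrite /alpha /nu /eta; field.
  by apply/andP; split; apply/eqP; lra.
have hs : s = eta * (1 - nu) / (nu * (2 - nu)) by [].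
have hc : c = (a * nu - alpha * (1 - nu)) / (nu * (2 - nu)) by [].
clearbody s c alpha.
clearbody nu eta.
have hN : nu * (2 - nu) != 0 by rewrite gt_eqF.
have [hn1 hn2] : nu != 0 /\ 2 - nu != 0 by move: hN; rewrite mulf_eq0 negb_or => /andP [-> ->].
have hs' : s * (nu * (2 - nu)) = eta * (1 - nu) by rewrite hs mulfVK.
have h1s : 0 < 1 - s by nra.
have h1s' : 0 < 1 + s by nra.
have hv z : (a*nu - mt*(nu-eta)*(1-nu) + eta*(1-nu)*z)/(nu*(2-nu)) = c + s * z.
  by rewrite hc hs ha; field; rewrite hn1 hn2.
split.
  rewrite hc hs ha; field; rewrite hn1 hn2 !andbT; apply/eqP; nra.
move=> x y; rewrite /nash_funds br2_iff // br3_iff //.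
have e1 : forall u v : R, B1 rho mt u v = nu * (u + mt) / 2 - eta * (v + mt) / 2 by [].
split.
- case=> H2 H3.
  have E2 := (proj1 (@argmax _ nu eta a mt y x hnu)).
  have E3 := (proj1 (@argmax _ nu eta a mt x y hnu)).
  rewrite hv in E2; rewrite hv in E3.
  have ex : x = c + s * y by apply: E2; move=> x'; rewrite -!e1; exact: H2.
  have ey : y = c + s * x by apply: E3; move=> y'; rewrite -!e1; exact: H3.
  have exy : x = y.
    have : (1 + s) * (x - y) = 0 by lra.
    move/eqP; rewrite mulf_eq0 subr_eq0 => /orP [/eqP|/eqP //]; lra.
  have hx : x = c / (1 - s).
    apply: (@mulIf _ (1 - s)); first by rewrite gt_eqF.
    rewrite mulfVK ?gt_eqF //; rewrite -exy in ex; lra.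
  by split; rewrite -?exy.
- case=> hx hy; split.
  + move=> x'; rewrite !e1; apply/(proj2 (@argmax _ nu eta a mt y x hnu)).
    rewrite hv hx hy; field; by rewrite gt_eqF.
  + move=> y'; rewrite !e1; apply/(proj2 (@argmax _ nu eta a mt x y hnu)).
    rewrite hv hx hy; field; by rewrite gt_eqF.
Qed.
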